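(* For every integer $i>1$, $\mathfrak{L}(\mathrm{rtDBVASIZE}(i-1))\subsetneq\mathfrak{L}(\mathrm{rtDBVASIZE}(i))$.
   Context: A real-time deterministic blind vector automaton of dimension $k$ ($\mathrm{rtDBVA}(k)$) is a 6-tuple $(Q,\Sigma,\delta,q_0,Q_a,v)$ with finite state set $Q$, initial state $q_0$, accept states $Q_a$, initial row vector $v\in\mathbb{Q}^k$ (freely chosen), and $\delta:Q\times(\Sigma\cup\{\cent,\$\})\to Q\times S$, $S$ the set of $k\times k$ rational matrices; the input $w$ is read as $\cent w\$$ left to right, one symbol per step, and $\delta(q,\sigma)=(q',M)$ means that in state $q$ reading $\sigma$ the machine goes to $q'$ and multiplies its row vector on the right by $M$. The input is accepted iff after processing $\$$ the state is in $Q_a$ and the first vector entry equals $1$. The size of an $m$-state $\mathrm{rtDBVA}(k)$ is $mk$. $\mathfrak{L}(\mathrm{rtDBVASIZE}(i))$ denotes the class of languages recognized by real-time deterministic blind vector automata of size $i$. *)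

(* Defs.v *)
From HB Require Import structures.
From mathcomp Require Import all_boot all_order all_algebra.
Set Implicit Arguments. Unset Strict Implicit. Unset Printing Implicit Defensive.
Import GRing.Theory Num.Theory.
Local Open Scope ring_scope.

Inductive tape_sym (Sigma : Type) : Type :=
| Cent : tape_sym Sigma
| Dollar : tape_sym Sigma
| Sym : Sigma -> tape_sym Sigma.
Arguments Cent {Sigma}.
Arguments Dollar {Sigma}.

(* A real-time deterministic blind vector automaton over alphabet Sigma,
   with finite state set Q and vector dimension k.+1 (dimension >= 1, so that
   the "first entry" exists). Vectors are row vectors multiplied on the right. *)
Record rtDBVA (Sigma : Type) (Q : finType) (k : nat) := RtDBVA {
  delta : Q -> tape_sym Sigma -> Q * 'M[rat]_k.+1;
  q0 : Q;
  acc : {pred Q};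
  v0 : 'rV[rat]_k.+1
}.

Definition dim_of Sigma (Q : finType) k (A : rtDBVA Sigma Q k) : nat := k.+1.

Definition size_of Sigma (Q : finType) k (A : rtDBVA Sigma Q k) : nat :=
  #|Q| * dim_of A.

Definition step Sigma (Q : finType) k (A : rtDBVA Sigma Q k)
  (c : Q * 'rV[rat]_k.+1) (s : tape_sym Sigma) : Q * 'rV[rat]_k.+1 :=
  let: (q, v) := c in
  let: (q', M) := delta A q s in (q', v *m M).

Definition run Sigma (Q : finType) k (A : rtDBVA Sigma Q k) (w : seq Sigma)
  : Q * 'rV[rat]_k.+1 :=
  foldl (step A) (q0 A, v0 A) (Cent :: map (@Sym Sigma) w ++ [:: Dollar]).

Definition accepts Sigma (Q : finType) k (A : rtDBVA Sigma Q k) (w : seq Sigma)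
  : Prop :=
  let: (q, v) := run A w in (q \in acc A) /\ v ord0 ord0 = 1.

Definition in_rtDBVASIZE (i : nat) (Sigma : finType) (L : seq Sigma -> Prop)
  : Prop :=
  exists (Q : finType) (k : nat) (A : rtDBVA Sigma Q k),
    size_of A = i /\ forall w, L w <-> accepts A w.

(* Main.v *)
Require Import Defs.
From mathcomp Require Import all_boot all_order all_algebra.
From Stdlib Require Import Setoid.
Set Implicit Arguments. Unset Strict Implicit. Unset Printing Implicit Defensive.
Import GRing.Theory Num.Theory.

Section Gen.
Local Open Scope ring_scope.
Variables (Sigma : Type) (Q : finType) (k : nat) (B : rtDBVA Sigma Q k).

Lemma stepE (q : Q) v s : step B (q, v) s = ((delta B q s).1, v *m (delta B q s).2).
Proof. by rewrite /step; case: (delta B q s). Qed.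

Lemma acceptsE w : accepts B w <-> ((run B w).1 \in acc B /\ (run B w).2 ord0 ord0 = 1).
Proof. by rewrite /accepts; case: (run B w). Qed.
End Gen.

Section Sim.
Local Open Scope ring_scope.
Variables (Sigma : Type) (Q : finType) (k : nat) (B : rtDBVA Sigma Q k).
Local Notation m := #|Q|.
Local Notation K := (#|Q| * k.+1)%N.
Definition rk (q : Q) : 'I_m := enum_rank q.
Definition Emx q (v : 'rV[rat]_k.+1) : 'M[rat]_(m, k.+1) := delta_mx (rk q) (0 : 'I_1) *m v.
Definition enc q v : 'rV[rat]_(1 + K) := row_mx 0 (mxvec (Emx q v)).
Definition Mst s : 'M[rat]_K :=
  \sum_q2 (lin_mulmx (delta_mx (rk (delta B q2 s).1) (rk q2) : 'M[rat]_m) : 'M_(K, K))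
     *m (lin_mulmxr (delta B q2 s).2 : 'M_(K, K)).
Definition Mfin : 'M[rat]_(K, 1) :=
  \sum_q2 ((delta B q2 Dollar).1 \in acc B)%:R *:
     ((lin_mul_row (delta_mx 0 (rk q2) : 'rV[rat]_m) : 'M_(K, k.+1)) *m ((delta B q2 Dollar).2 *m delta_mx 0 (0 : 'I_1))).

Lemma Mst_ok q v s : mxvec (Emx q v) *m Mst s = mxvec (Emx (delta B q s).1 (v *m (delta B q s).2)).
Proof.
rewrite /Mst mulmx_sumr.
rewrite (eq_bigr (fun q2 => mxvec (delta_mx (rk (delta B q2 s).1) (rk q2) *m Emx q v *m (delta B q2 s).2))); last first.
  by move=> q2 _; rewrite mulmxA /lin_mulmx mul_vec_lin /lin_mulmxr mul_vec_lin.
rewrite -linear_sum /=; congr mxvec.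
rewrite (bigD1 q) //= big1 ?addr0.
  by rewrite /Emx !mulmxA mul_delta_mx.
move=> q2 hq2; rewrite /Emx !mulmxA mul_delta_mx_cond.
by rewrite (inj_eq enum_rank_inj) (negbTE hq2) mulr0n !mul0mx.
Qed.

Lemma Mfin_ok q v : (mxvec (Emx q v) *m Mfin) ord0 ord0 =
   ((delta B q Dollar).1 \in acc B)%:R * (v *m (delta B q Dollar).2) ord0 ord0.
Proof.
rewrite /Mfin mulmx_sumr (bigD1 q) //= big1 ?addr0.
  rewrite -scalemxAr mulmxA mul_vec_lin_row /Emx !mulmxA mul_delta_mx.
  rewrite mxE; congr (_ * _).
  have e1 : (delta_mx 0 0 : 'M[rat]_1) = 1%:M by apply/matrixP=> a b; rewrite !ord1 !mxE.
  rewrite e1 mul1mx mxE (bigD1 ord0) //= big1 ?addr0; first by rewrite [X in _ * X]mxE /= mulr1 mxE.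
  by move=> j hj; rewrite [X in _ * X]mxE (negbTE hj) /= mulr0.
move=> q2 hq2; rewrite -scalemxAr mulmxA mul_vec_lin_row /Emx !mulmxA mul_delta_mx_cond.
by rewrite (inj_eq enum_rank_inj) (negbTE hq2) mulr0n !mul0mx scaler0.
Qed.

Definition Astep s : 'M[rat]_(1 + K) := block_mx 0 0 0 (Mst s).
Definition Afin : 'M[rat]_(1 + K) := block_mx 0 0 Mfin 0.
Definition simA : rtDBVA Sigma unit K :=
  @RtDBVA Sigma unit K (fun _ s => (tt, match s with Dollar => Afin | _ => Astep s end))
    tt predT (enc (q0 B) (v0 B)).

Definition notD (s : tape_sym Sigma) : bool := if s is Dollar then false else true.

Lemma sim_step q v s : notD s ->
  step simA (tt, enc q v) s = (tt, enc (step B (q, v) s).1 (step B (q, v) s).2).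
Proof.
rewrite !stepE /=.
case: s => //= [|x] _; rewrite /Astep /enc; congr pair;
  rewrite (@mul_row_block _ 1 1 K 1 K 0 (mxvec (Emx q v)) 0 0 0 (Mst _));
  by rewrite ?mulmx0 ?mul0mx ?addr0 ?add0r Mst_ok.
Qed.

Lemma sim_foldl l q v : all notD l ->
  foldl (step simA) (tt, enc q v) l = (tt, enc (foldl (step B) (q, v) l).1 (foldl (step B) (q, v) l).2).
Proof.
elim: l q v => [|s l IH] q v; first by [].
case/andP=> hs hl.
change (foldl (step simA) (step simA (tt, enc q v) s) l = (tt, enc (foldl (step B) (step B (q, v) s) l).1 (foldl (step B) (step B (q, v) s) l).2)).
rewrite sim_step //.
by case: (step B (q, v) s) => q' v'; apply: IH.
Qed.

Lemma runE (Q' : finType) k' (C : rtDBVA Sigma Q' k') w :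
  run C w = step C (foldl (step C) (q0 C, v0 C) (Cent :: map (@Sym Sigma) w)) Dollar.
Proof. by rewrite /run -cat_cons foldl_cat. Qed.

Lemma sim_accepts w : accepts simA w <-> accepts B w.
Proof.
rewrite !acceptsE !runE.
have hall : all notD (Cent :: map (@Sym Sigma) w) by rewrite /= all_map; elim: w.
have -> : (q0 simA, v0 simA) = (tt, enc (q0 B) (v0 B)) by [].
rewrite sim_foldl //.
case: (foldl (step B) (q0 B, v0 B) (Cent :: map (Sym (Sigma:=Sigma)) w)) => q v; rewrite !stepE /= /Afin /enc.
rewrite (@mul_row_block _ 1 1 K 1 K 0 (mxvec (Emx q v)) 0 0 Mfin 0) ?mulmx0 ?mul0mx ?addr0 ?add0r.
have -> : (ord0 : 'I_(1 + K)) = lshift K ord0 by apply: val_inj.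
rewrite (@row_mxEl _ 1 1 K) Mfin_ok.
case: ((delta B q Dollar).1 \in acc B); rewrite /= ?mul1r ?mul0r; split => -[] //.
Qed.

Lemma sim_size : size_of simA = (size_of B).+1.
Proof. by rewrite /size_of /dim_of card_unit mul1n. Qed.
End Sim.
Section Sep.
Local Open Scope ring_scope.
Variable p : nat.
Local Notation N := (p.+1 * p.+1)%N.
Definition Sig2 := ('I_N + {set 'I_N})%type.
Definition fI (t : 'I_N) : rat := (t : nat)%:R.
Definition Xm (j : 'I_N) : 'M[rat]_p.+1 := \matrix_(a, c) ((a == ord0)%:R * fI j ^+ c).
Definition pT (T : {set 'I_N}) : {poly rat} := 1 + \prod_(a <- [seq fI t | t <- enum T]) ('X - a%:P).
Definition Ym (T : {set 'I_N}) : 'M[rat]_p.+1 := \matrix_(r, c) ((c == ord0)%:R * (pT T)`_r).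
Definition A2 : rtDBVA Sig2 unit p :=
  @RtDBVA Sig2 unit p (fun _ s => (tt, match s with Sym (inl j) => Xm j | Sym (inr T) => Ym T | _ => 1%:M end))
   tt predT (delta_mx 0 0).

Lemma fI_inj : injective fI.
Proof. by move=> a b /eqP; rewrite /fI eqr_nat => /eqP /val_inj. Qed.

Lemma A2_1 j : accepts A2 [:: inl j].
Proof.
rewrite /accepts /run /=; split => //.
by rewrite ?mulmx1 ?mul1mx -rowE !mxE eqxx mul1r expr0.
Qed.

Lemma pT_eval (T : {set 'I_N}) (j : 'I_N) : (pT T).[fI j] = 1 <-> j \in T.
Proof.
rewrite /pT hornerD hornerC.
split.
  move=> /eqP; rewrite -subr_eq0 addrC addKr => h.
  by have := root_prod_XsubC [seq fI t | t <- enum T] (fI j); rewrite /root h (mem_map fI_inj) mem_enum.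
move=> hj; apply/eqP; rewrite -subr_eq0 addrC addKr.
by have := root_prod_XsubC [seq fI t | t <- enum T] (fI j); rewrite /root (mem_map fI_inj) mem_enum hj => ->.
Qed.

Lemma pT_size (T : {set 'I_N}) : (#|T| <= p)%N -> (size (pT T) <= p.+1)%N.
Proof.
move=> hT; rewrite /pT; apply: leq_trans (size_add _ _) _.
rewrite size_poly1 size_prod_XsubC size_map -cardE.
by rewrite geq_max /= ltnS.
Qed.

Lemma A2_2 j (T : {set 'I_N}) : (#|T| <= p)%N -> accepts A2 [:: inl j; inr T] <-> j \in T.
Proof.
move=> hT; rewrite -pT_eval /accepts /run /=.
rewrite ?mulmx1 ?mul1mx -rowE.
have -> : (row ord0 (Xm j) *m Ym T) ord0 ord0 = (pT T).[fI j].
  rewrite (horner_coef_wide _ (pT_size hT)) mxE; apply: eq_bigr => r _.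
  by rewrite !mxE !eqxx !mul1r mulrC.
by split => // -[].
Qed.
End Sep.
Section Sep2.
Local Open Scope ring_scope.
Variable p : nat.
Hypothesis hp : (0 < p)%N.
Local Notation N := (p.+1 * p.+1)%N.
Variables (Q : finType) (k : nat) (B : rtDBVA (Sig2 p) Q k).
Hypothesis hsize : (#|Q| * k.+1 = p)%N.
Hypothesis hB : forall w, accepts (A2 p) w <-> accepts B w.

Definition cfg (j : 'I_N) := foldl (step B) (q0 B, v0 B) [:: Cent; Sym (inl j)].

Lemma pigeon : exists q : Q, (p.+1 <= #|[set j | (cfg j).1 == q]|)%N.
Proof.
have hsum : N = (\sum_(q : Q) #|[set j | (cfg j).1 == q]|)%N.
  rewrite -{1}(card_ord N) -sum1_card (partition_big (fun j => (cfg j).1) predT) //=.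
  apply: eq_bigr => q _; rewrite -sum1_card; apply: eq_bigl => j; by rewrite inE.
case: (boolP [exists q, (p.+1 <= #|[set j | (cfg j).1 == q]|)%N]) => [/existsP //|/existsPn H].
exfalso.
have hQ : (#|Q| <= p)%N by rewrite -hsize leq_pmulr.
have : (N <= #|Q| * p)%N.
  rewrite hsum -sum1_card big_distrl /= mul1n.
  by apply: leq_sum => q _; move: (H q); rewrite -ltnNge ltnS.
move=> h; have := leq_trans h (leq_mul hQ (leqnn p)).
by rewrite ltn_geF // ltn_mul.
Qed.

Lemma run1 j : run B [:: inl j] = step B (cfg j) Dollar.
Proof. by []. Qed.

Lemma run2 j T : run B [:: inl j; inr T] = step B (step B (cfg j) (Sym (inr T))) Dollar.
Proof. by []. Qed.

Lemma nosep : False.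
Proof.
have [q hq] := pigeon.
set S := [set j | (cfg j).1 == q] in hq.
pose g (l : 'I_p.+1) : 'I_N := enum_val (widen_ord hq l).
have ginj : injective g.
  by move=> a b /enum_val_inj /(congr1 val) /= /val_inj.
have gq l : (cfg (g l)).1 = q.
  by have := enum_valP (widen_ord hq l); rewrite inE => /eqP.
pose vv l := (cfg (g l)).2.
pose Md := (delta B q Dollar).2.
pose P (T : {set 'I_N}) := (delta B q (Sym (inr T))).2 *m (delta B (delta B q (Sym (inr T))).1 Dollar).2.
pose qT (T : {set 'I_N}) := (delta B (delta B q (Sym (inr T))).1 Dollar).1.
have cfgE l : cfg (g l) = (q, vv l) by rewrite /vv -(gq l); case: (cfg (g l)).
have acc1 l : (vv l *m Md) 0 0 = 1.
  have := A2_1 (g l); move/hB/acceptsE; rewrite run1 cfgE stepE /=; by case.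
have acc2 l T : accepts B [:: inl (g l); inr T] <-> (qT T \in acc B /\ (vv l *m P T) 0 0 = 1).
  by rewrite acceptsE run2 cfgE !stepE /= mulmxA.
pose Tb b := (g @: [set: 'I_p.+1]) :\ g b.
have Tbc b : (#|Tb b| <= p)%N.
  have := cardsD1 (g b) (g @: [set: 'I_p.+1]).
  rewrite imset_f ?inE // card_imset // cardsT card_ord add1n => h.
  by apply: eq_leq; apply: succn_inj; exact: (esym h).
have inTb a b : (g a \in Tb b) = (a != b).
  by rewrite !inE imset_f ?inE // andbT (inj_eq ginj).
have accT a b : a != b -> accepts B [:: inl (g a); inr (Tb b)].
  move=> hab; apply/hB; apply/(@A2_2 p _ _ (Tbc b)); by rewrite inTb.
have naccT b : ~ accepts B [:: inl (g b); inr (Tb b)].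
  move/hB/(@A2_2 p _ _ (Tbc b)); by rewrite inTb eqxx.
have other (b : 'I_p.+1) : exists a, a != b.
  case: (eqVneq b ord0) => [->|hb]; last by exists ord0; rewrite eq_sym.
  have h1 : (1 < p.+1)%N by [].
  by exists (Ordinal h1).
have dd_nz b : (vv b *m P (Tb b)) 0 0 - 1 != 0.
  rewrite subr_eq0; apply/negP => /eqP h1.
  have [a hab] := other b.
  have [hq' _] := (acc2 a (Tb b)).1 (accT a b hab).
  apply: (naccT b); apply/(acc2 b (Tb b)); by split.
pose W := \matrix_(a, r) vv a 0 r : 'M[rat]_(p.+1, k.+1).
pose Psi := \matrix_(r, b) ((P (Tb b)) r 0 - Md r 0) : 'M[rat]_(k.+1, p.+1).
have WPsi : W *m Psi = diag_mx (\row_a ((vv a *m P (Tb a)) 0 0 - 1)).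
  apply/matrixP => a b; rewrite !mxE.
  have -> : \sum_r W a r * Psi r b = (vv a *m P (Tb b)) 0 0 - (vv a *m Md) 0 0.
    rewrite !mxE -sumrB; apply: eq_bigr => r _; by rewrite !mxE mulrBr.
  rewrite acc1; case: (eqVneq a b) => [->|hab]; first by rewrite mulr1n mxE.
  rewrite mulr0n; apply/eqP; rewrite subr_eq0; apply/eqP.
  by have [_ ->] := (acc2 a (Tb b)).1 (accT a b hab).
have hu : W *m Psi \in unitmx.
  rewrite WPsi unitmxE det_diag unitfE; apply/prodf_neq0 => a _; by rewrite mxE.
have := mxrankM_maxl W Psi; rewrite mxrank_unit // => h.
have := leq_trans h (rank_leq_col W).
have hk : (k.+1 <= p)%N.
  rewrite -hsize leq_pmull //; apply/card_gt0P; by exists (q0 B).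
by move=> h2; have := leq_trans h2 hk; rewrite ltnn.
Qed.
End Sep2.

Theorem theorem12 (i : nat) (hi : (1 < i)%N) :
  (forall (Sigma : finType) (L : seq Sigma -> Prop),
      in_rtDBVASIZE i.-1 L -> in_rtDBVASIZE i L) /\
  (exists (Sigma : finType) (L : seq Sigma -> Prop),
      in_rtDBVASIZE i L /\ ~ in_rtDBVASIZE i.-1 L).
Proof.
have hi0 : (0 < i)%N by apply: ltnW.
have hp : (0 < i.-1)%N by case: i hi {hi0} => [|[|j]].
split.
  move=> Sigma L [Q [k [B [hs hL]]]].
  exists unit, (#|Q| * k.+1)%N, (simA B); split.
    by rewrite sim_size hs prednK.
  move=> w; rewrite hL; symmetry; exact: sim_accepts.
exists (Sig2 i.-1), (accepts (A2 i.-1)); split.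
  exists unit, i.-1, (A2 i.-1); split => //.
  by rewrite /size_of /dim_of card_unit mul1n prednK.
move=> [Q [k [B [hs hL]]]].
exact: (@nosep i.-1 hp Q k B hs hL).
Qed.
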